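(* Let $N\ge 4$ and write $k(x)=2p(x)$. Then $p(N-2)=1$, $p(N-3)=0$, and for every $x\in\{0,\dots,N-4\}$, $$k(x)=\frac{(N-x)\,(N-x-1-k(x+1))}{(N-x-1)^2-k(x+1)}.$$ Moreover, for every $x\in\{0,\dots,N-2\}$, $2p(x)-1>0$ if $N-x$ is even and $2p(x)-1<0$ if $N-x$ is odd.
   Context: For $\sigma\in\mathcal{S}_N$, $\eta_1(\sigma)$ is the number of fixed points and $\eta_2(\sigma)$ the number of 2-cycles of $\sigma$; $\nu$ is the uniform measure on $\mathcal{S}_N$, and for $x\in\{0,\dots,N\}\setminus\{N-1\}$, $p(x)=\mathbb{E}_\nu[\eta_2\mid\eta_1=x]$. *)

(* Defs.v *)
From HB Require Import structures.
From mathcomp Require Import all_boot all_order all_algebra all_fingroup.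
Set Implicit Arguments. Unset Strict Implicit. Unset Printing Implicit Defensive.
Import GRing.Theory Num.Theory.

Definition eta1 (N : nat) (s : 'S_N) : nat := #|[set i : 'I_N | s i == i]|.

Definition eta2 (N : nat) (s : 'S_N) : nat :=
  #|[set c in porbits s | #|c| == 2]|.

(* p N x = E_nu[eta2 | eta1 = x] under the uniform measure nu on S_N:
   the average of eta2 over the permutations with exactly x fixed points.
   (Only meaningful when this set is nonempty, i.e. x <> N-1, x <= N.) *)
Definition p (N x : nat) : rat :=
  ((\sum_(s : 'S_N | eta1 s == x) (eta2 s)%:R) /
   (#|[set s : 'S_N | eta1 s == x]|)%:R)%R.

Definition k (N x : nat) : rat := (2 * p N x)%R.

(* Main.v *)
Require Import Defs.
From HB Require Import structures.
From mathcomp Require Import all_boot all_order all_algebra all_fingroup.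
From mathcomp Require Import ring lra zify.
Import GRing.Theory Num.Theory.
Local Open Scope ring_scope.

Fixpoint E (m : nat) : rat :=
  match m with 0%N => 1 | m'.+1 => m'.+1%:R * E m' + (-1) ^+ m'.+1 end.

Lemma ES m : E m.+1 = m.+1%:R * E m + (-1) ^+ m.+1. Proof. by []. Qed.

Lemma sign_cases n : (-1) ^+ n = 1 :> rat \/ (-1) ^+ n = -1 :> rat.
Proof. rewrite -signr_odd; case: (odd n); [right; exact: expr1 | left; exact: expr0]. Qed.

Lemma E_ge1 n : 1 <= E n.+2.
Proof.
elim: n => [|n IH]; first by rewrite /= ; lra.
rewrite ES; have [->|->] := sign_cases n.+3; rewrite -[n.+3%:R]natr1 -[n.+2%:R]natr1;
  have : (0 <= n%:R :> rat) by rewrite ler0n.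
  rewrite ?natrD; nra.
rewrite ?natrD; nra.
Qed.

Lemma alt_sum n : \sum_(i < n.+2) ('C(n.+1, i)%:R * (-1) ^+ i) = 0 :> rat.
Proof.
transitivity (\sum_(i < n.+2) (-1 : rat) ^+ i *+ 'C(n.+1, i)).
  by apply: eq_bigr => i _; rewrite mulr_natl.
by rewrite -exprD1n addNr expr0n.
Qed.

Lemma Tsum n : \sum_(x < n.+1) 'C(n, x)%:R * E x = n`!%:R.
Proof.
elim: n => [|n IH]; first by rewrite big_ord1 /= mul1r.
rewrite big_ord_recl /= bin0 mul1r.
have H := alt_sum n; rewrite big_ord_recl /= bin0 mul1r expr0 in H.
transitivity (1 + n.+1%:R * \sum_(x < n.+1) 'C(n, x)%:R * E x
   + \sum_(i < n.+1) 'C(n.+1, bump 0 i)%:R * (-1) ^+ bump 0 i).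
  rewrite mulr_sumr -addrA -big_split /=; congr (_ + _).
  apply: eq_bigr => i _; rewrite /bump /= !add0n mulrDr mulrA -natrM mulnC -mul_bin_diag natrM /= mulrA add1n.
  done.
have F : (n.+1)`!%:R = n.+1%:R * n`!%:R :> rat by rewrite factS natrM.
rewrite F -IH.
have -> : \sum_(i < n.+1) 'C(n.+1, bump 0 i)%:R * (-1) ^+ bump 0 i = -1 :> rat.
  by apply/eqP; rewrite -subr_eq0 opprK addrC; apply/eqP.
by rewrite addrAC addrN add0r.
Qed.

Lemma Tsum_rev n : \sum_(x < n.+1) 'C(n, x)%:R * E (n - x) = n`!%:R.
Proof.
rewrite -Tsum (reindex_inj rev_ord_inj) /=; apply: eq_bigr => i _.
have hi : (i <= n)%N by rewrite -ltnS.
by rewrite subSS bin_sub // subKn.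
Qed.

Lemma E_sign m : (m.+2%:R * m.+1%:R * E m - E m.+2) = (-1) ^+ m.+2 * m.+1%:R.
Proof.
rewrite !ES !exprS; ring.
Qed.
Section Gen.
Variable T : finType.
Implicit Types (s : {perm T}) (A B C : {set T}).

Definition fixin s B := [set i in B | s i == i].
Definition der C := #|[set s : {perm T} | perm_on C s & [forall i in C, s i != i]]|.

Lemma fiber_eq B A s : A \subset B ->
  (perm_on B s && (fixin s B == A)) =
  (perm_on (B :\: A) s && [forall i in B :\: A, s i != i]).
Proof.
move=> AB; apply/idP/idP.
- case/andP=> pB /eqP <-; apply/andP; split.
    apply/subsetP=> y; rewrite inE => sy; rewrite !inE negb_and sy orbT /=.
    exact: (subsetP pB y).
  apply/forall_inP => y; rewrite !inE => /andP[]; rewrite negb_and => /orP[] //.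
  by move=> /negP nB /nB.
- case/andP=> pBA /forall_inP dB; apply/andP; split.
    by apply: subset_trans pBA _; apply: subsetDl.
  apply/eqP/setP => y; rewrite !inE.
  case yA: (y \in A).
    rewrite (subsetP AB y yA) /= (out_perm pBA) ?eqxx //.
    by rewrite !inE yA.
  case yB: (y \in B) => //=; apply/negP => /eqP sy.
  by have := dB y; rewrite !inE yA yB sy eqxx => /(_ isT).
Qed.

Lemma card_fix_gen B (R : pred nat) :
  #|[set s : {perm T} | perm_on B s & R #|fixin s B|]| =
  \sum_(A : {set T} | (A \subset B) && R #|A|) der (B :\: A).
Proof.
rewrite -sum1dep_card.
rewrite (partition_big (fun s => fixin s B) (fun A : {set T} => (A \subset B) && R #|A|)); last first.
  move=> s /andP[_ Rs]; rewrite Rs andbT.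
  by apply/subsetP=> y; rewrite inE => /andP[].
apply: eq_bigr => A /andP[AB RA]; rewrite sum1dep_card /der; apply: eq_card => s.
rewrite !inE -fiber_eq //.
by case: (fixin s B =P A) => [->|]; rewrite ?RA ?andbT ?andbF.
Qed.


Lemma sum_sets_size C (F : nat -> rat) :
  \sum_(A : {set T} | A \subset C) F #|A| =
  \sum_(x < #|C|.+1) 'C(#|C|, x)%:R * F x.
Proof.
rewrite (partition_big (fun A : {set T} => inord #|A| : 'I_#|C|.+1) xpredT) //.
apply: eq_bigr => x _.
transitivity (\sum_(A : {set T} | (A \subset C) && (#|A| == x)) F x).
  apply: eq_big => A.
    case hAC: (A \subset C) => //=.
    have h := subset_leq_card hAC.
    by rewrite -(inj_eq val_inj) /= inordK.
  move=> /andP[hAC /eqP <-].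
  by rewrite inordK // ltnS subset_leq_card.
rewrite (eq_bigr (fun _ => 1%N%:R * F x)) => [|? _]; last by rewrite mul1r.
rewrite -mulr_suml -natr_sum sum1dep_card cards_draws.
by rewrite mulrC.
Qed.

Lemma sum_E_sets C :
  \sum_(A : {set T} | A \subset C) E #|C :\: A| = (#|C|`!)%:R.
Proof.
rewrite (eq_bigr (fun A : {set T} => E (#|C| - #|A|))); last first.
  by move=> A /setIidPr hAC; rewrite cardsD hAC.
by rewrite (sum_sets_size C (fun a => E (#|C| - a))) Tsum_rev.
Qed.

Lemma derE n : forall C, #|C| = n -> (der C)%:R = E n.
Proof.
elim/ltn_ind: n => n IH C Cn.
have key : \sum_(A : {set T} | A \subset C) ((der (C :\: A))%:R - E #|C :\: A|) = 0.
  rewrite sumrB sum_E_sets -natr_sum.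
  have H := card_fix_gen C predT.
  rewrite (eq_bigl (fun A : {set T} => A \subset C)) in H; last by move=> A; rewrite andbT.
  rewrite -H.
  rewrite -(card_perm C); apply/eqP; rewrite subr_eq0 eqr_nat; apply/eqP.
  by apply: eq_card => s; rewrite !inE andbT.
rewrite (bigD1 set0) ?sub0set //= big1 ?addr0 in key.
  by move/eqP: key; rewrite setD0 subr_eq0 Cn => /eqP.
move=> A /andP[hAC An0]; rewrite (IH #|C :\: A|) ?subrr //.
move/setIidPr: (hAC) => hAC'; rewrite cardsD hAC' -Cn.
have h1 := subset_leq_card hAC.
have h2 : (0 < #|A|)%N by rewrite card_gt0.
lia.
Qed.


Lemma sum_const_draws B x (c : rat) :
  \sum_(A : {set T} | (A \subset B) && (#|A| == x)) c = 'C(#|B|, x)%:R * c.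
Proof.
rewrite (eq_bigr (fun _ => 1%N%:R * c)) => [|? _]; last by rewrite mul1r.
by rewrite -mulr_suml -natr_sum sum1dep_card cards_draws.
Qed.

Lemma card_fixset B x :
  (#|[set s : {perm T} | perm_on B s & #|fixin s B| == x]|)%:R
  = 'C(#|B|, x)%:R * E (#|B| - x) :> rat.
Proof.
rewrite (card_fix_gen B (fun n => n == x)) natr_sum -sum_const_draws; apply: eq_bigr => A /andP[hAB /eqP Ax].
by apply: derE; move/setIidPr: hAB => h; rewrite cardsD h Ax.
Qed.

Lemma fix_pow s a n : s a = a -> (s ^+ n)%g a = a.
Proof.
move=> sa; elim: n => [|n IH]; first by rewrite expg0 perm1.
by rewrite expgSr permM IH.
Qed.

Lemma porbit2_im {s} {a b} : a != b -> porbit s a = [set a; b] -> s a = b.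
Proof.
move=> ab Pab.
have := mem_porbit s 1 a; rewrite expg1.
rewrite Pab => /set2P[] // saa.
have : b \in porbit s a by rewrite Pab set22.
by case/porbitP=> n bn; move: ab; rewrite bn fix_pow // eqxx.
Qed.

Lemma twocycle s i j : i != j ->
  ([set i; j] \in porbits s) = (s i == j) && (s j == i).
Proof.
move=> ij; apply/idP/idP.
- case/imsetP => y _ Py.
  have Pi : porbit s i = [set i; j].
    by apply/eqP; rewrite Py eq_porbit_mem -Py set21.
  have Pj : porbit s j = [set j; i].
    by rewrite setUC; apply/eqP; rewrite Py eq_porbit_mem -Py set22.
  by rewrite (porbit2_im ij Pi) (porbit2_im _ Pj) ?eqxx // eq_sym.
- case/andP => /eqP sij /eqP sji; apply/imsetP; exists i => //.
  apply/setP => y; apply/set2P/porbitP.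
  + by case=> ->; [exists 0%N; rewrite expg0 perm1 | exists 1%N; rewrite expg1].
  + case=> n ->; elim: n => [|n IH]; first by left; rewrite expg0 perm1.
    rewrite expgSr permM; case: IH => ->; [right | left]; by [].
Qed.

Lemma tmul_fix i j (u : {perm T}) y : i != j -> perm_on (~: [set i; j]) u ->
  ((tperm i j * u)%g y == y) = (y \in ~: [set i; j]) && (u y == y).
Proof.
move=> ij pu; rewrite permM !inE.
have ui : u i = i by apply: (out_perm pu); rewrite !inE eqxx.
have uj : u j = j by apply: (out_perm pu); rewrite !inE eqxx orbT.
case: (eqVneq y i) => [->|yi]; first by rewrite tpermL uj eq_sym (negbTE ij).
case: (eqVneq y j) => [->|yj]; first by rewrite tpermR ui (negbTE ij).
by rewrite tpermD // eq_sym.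
Qed.

Lemma card_two i j x : i != j ->
  #|[set s : {perm T} | (#|[set y | s y == y]| == x) && ((s i == j) && (s j == i))]|
  = #|[set s : {perm T} | perm_on (~: [set i; j]) s & #|fixin s (~: [set i; j])| == x]|.
Proof.
move=> ij; set t := tperm i j; set P := [set i; j].
rewrite -[RHS](card_imset _ (mulgI t)); apply: eq_card => s.
have fixE u : perm_on (~: P) u -> [set y | (t * u)%g y == y] = fixin u (~: P).
  by move=> pu; apply/setP => y; rewrite inE /t tmul_fix //; rewrite /fixin inE.
apply/idP/imsetP.
- rewrite inE => /andP[hx /andP[/eqP sij /eqP sji]].
  have su : s = (t * (t * s))%g by rewrite mulgA tperm2 mul1g.
  have pu : perm_on (~: P) (t * s)%g.
    apply/subsetP => y; rewrite inE permM !inE; apply: contraR.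
    by rewrite negbK /t => /orP[] /eqP ->; rewrite ?tpermL ?tpermR ?sij ?sji eqxx.
  exists (t * s)%g => //; rewrite inE pu /= -(fixE _ pu) -su //.
- case=> u; rewrite inE => /andP[pu hx] ->.
  have ui : u i = i by apply: (out_perm pu); rewrite !inE eqxx.
  have uj : u j = j by apply: (out_perm pu); rewrite !inE eqxx orbT.
  by rewrite inE fixE // hx !permM tpermL tpermR ui uj !eqxx.
Qed.

End Gen.

Lemma cnt_eq N x :
  (#|[set s : 'S_N | eta1 s == x]|)%:R = 'C(N, x)%:R * E (N - x) :> rat.
Proof.
have := card_fixset _ [set: 'I_N] x; rewrite cardsT card_ord => <-.
congr (_%:R); apply: eq_card => s; rewrite !inE.
have -> : perm_on [set: 'I_N] s by apply/subsetP => y; rewrite inE.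
have -> : fixin _ s [set: 'I_N] = [set i | s i == i] by apply/setP => i; rewrite !inE.
by [].
Qed.

Lemma sum_eq N x :
  \sum_(s : 'S_N | eta1 s == x) (eta2 s)%:R
  = 'C(N, 2)%:R * ('C(N - 2, x)%:R * E (N - 2 - x)) :> rat.
Proof.
rewrite -natr_sum.
have -> : \sum_(s : 'S_N | eta1 s == x) eta2 s =
   \sum_(P : {set 'I_N} | #|P| == 2)
      #|[set s : 'S_N | (eta1 s == x) && (P \in porbits s)]|.
  rewrite (eq_bigr (fun s : 'S_N => \sum_(P : {set 'I_N} | (#|P| == 2) && (P \in porbits s)) 1%N)); last first.
    move=> s _; rewrite sum1dep_card /eta2; apply: eq_card => P; rewrite !inE andbC //.
  rewrite (exchange_big_dep (fun P : {set 'I_N} => #|P| == 2)) /=; last by move=> s P _ /andP[].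
  apply: eq_bigr => P P2; rewrite -sum1dep_card; apply: eq_bigl => s.
  by rewrite P2.
rewrite natr_sum.
rewrite (eq_bigr (fun _ => 'C(N - 2, x)%:R * E (N - 2 - x))); last first.
  move=> P /cards2P [i [j [ij ->]]].
  rewrite (eq_card (B := [set s : 'S_N | (#|[set y | s y == y]| == x) && ((s i == j) && (s j == i))])); last first.
    by move=> s; rewrite !inE twocycle.
  rewrite card_two // card_fixset.
  have hc : #|~: [set i; j]| = (N - 2)%N.
    have := cardsC [set i; j]; rewrite cards2 ij card_ord /=; lia.
  by rewrite hc.
rewrite (eq_bigl (fun P : {set 'I_N} => (P \subset [set: 'I_N]) && (#|P| == 2))); last first.
  by move=> P; rewrite subsetT.
by rewrite sum_const_draws cardsT card_ord.
Qed.
Lemma alg (nn b e c d : rat) : 0 <= nn -> (e = 1 \/ e = -1) -> 1 <= b ->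
  c = (nn + 3) * b - e -> d = (nn + 4) * c + e ->
  (nn + 4) * (nn + 3) * b / d =
  (nn + 4) * ((nn + 3) - (nn + 3) * (b - e) / c) / ((nn + 3) ^+ 2 - (nn + 3) * (b - e) / c).
Proof.
move=> hn he hb -> ->.
have hc : 0 < (nn + 3) * b - e by case: he => ->; nra.
have hd : 0 < (nn + 4) * ((nn + 3) * b - e) + e by case: he => ->; nra.
have hD : (nn + 3) ^+ 2 - (nn + 3) * (b - e) / ((nn + 3) * b - e) =
   (nn + 3) * (nn + 2) * ((nn + 4) * b - e) / ((nn + 3) * b - e).
  by field; lra.
rewrite hD.
have hDn : 0 < (nn + 4) * b - e by case: he => ->; nra.
have h2 : 0 < nn + 2 by lra.
have h3 : 0 < nn + 3 by lra.
field; by rewrite (lt0r_neq0 hc) (lt0r_neq0 hDn) (lt0r_neq0 h2) (lt0r_neq0 h3) (lt0r_neq0 hd).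
Qed.

Lemma fact_neq0 n : (n`!)%:R != 0 :> rat.
Proof. by rewrite pnatr_eq0 -lt0n fact_gt0. Qed.

Lemma binE n kk : (kk <= n)%N ->
  'C(n, kk)%:R = n`!%:R / (kk`!%:R * (n - kk)`!%:R) :> rat.
Proof.
move=> h; rewrite -(bin_fact h) !natrM mulfK //.
by rewrite mulf_neq0 // fact_neq0.
Qed.

Lemma p_eq N x n : (N - x)%N = n.+2 ->
  p N x = (n.+2%:R * n.+1%:R * E n) / E n.+2 / 2.
Proof.
move=> hN; rewrite /p sum_eq cnt_eq hN.
have hx : N = (x + n.+2)%N by lia.
have e1 : (N - 2 - x)%N = n by lia.
rewrite e1.
have hb : 'C(N, 2)%:R * 'C(N - 2, x)%:R = 'C(N, x)%:R * 'C(n.+2, 2)%:R :> rat.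
  rewrite hx !binE; try lia.
  have -> : (x + n.+2 - 2 = x + n)%N by lia.
  have -> : (x + n - x = n)%N by lia.
  have -> : (x + n.+2 - x = n.+2)%N by lia.
  have -> : (n.+2 - 2 = n)%N by lia.
  have := fact_neq0 (x + n); have := fact_neq0 x; have := fact_neq0 n.
  have := fact_neq0 n.+2; have := fact_neq0 2.
  move=> h1 h2 h3 h4 h5; field.
  by rewrite h1 h2 h3 h4 h5.
have hC2 : 'C(n.+2, 2)%:R = n.+2%:R * n.+1%:R / 2 :> rat.
  have := mul_bin_left n.+2 1; rewrite bin1 subn1 /= => h.
  apply: (mulIf (_ : (2 : rat) != 0)) => //.
  by rewrite mulfVK // mulrC -natrM mulnC -h natrM.
have hCx : 'C(N, x)%:R != 0 :> rat by rewrite pnatr_eq0 -lt0n bin_gt0; lia.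
have hE : E n.+2 != 0 by rewrite lt0r_neq0 //; have := E_ge1 n; lra.
rewrite mulrA hb hC2; field.
by rewrite hE hCx.
Qed.

Lemma Epos n : 0 < E n.+2.
Proof. by have := E_ge1 n; lra. Qed.

Theorem mainTheorem6 (N : nat) (hN : (4 <= N)%N) :
  [/\ p N (N - 2) = 1,
      p N (N - 3) = 0,
      (forall x : nat, (x <= N - 4)%N ->
         k N x = ((N - x)%:R * ((N - x - 1)%:R - k N x.+1)) /
                 ((N - x - 1)%:R ^+ 2 - k N x.+1))
    & (forall x : nat, (x <= N - 2)%N ->
         (~~ odd (N - x) -> 0 < 2 * p N x - 1) /\
         (odd (N - x) -> 2 * p N x - 1 < 0))].
Proof.
split.
- rewrite (@p_eq _ _ 0); last by lia.
  have E2 : E 2 = 1 by rewrite /=; ring.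
  by rewrite E2 /=; field.
- rewrite (@p_eq _ _ 1); last by lia.
  have E1 : E 1 = 0 by rewrite /=; ring.
  by rewrite E1 !mulr0 !mul0r.
- move=> x hx.
  set n := (N - x - 4)%N.
  have h4 : (N - x)%N = n.+4 by rewrite /n; lia.
  have h3 : (N - x.+1)%N = n.+3 by rewrite /n; lia.
  have h3' : (N - x - 1)%N = n.+3 by rewrite /n; lia.
  rewrite /k (p_eq _ _ _ h4) (p_eq _ _ _ h3) h4 subn1 /=.
  set nn := (n%:R : rat).
  set e := ((-1) ^+ n : rat).
  have he : e = 1 \/ e = -1 by exact: sign_cases.
  have hb : 1 <= E n.+2 by exact: E_ge1.
  have c4 : n.+4%:R = nn + 4 :> rat by rewrite -addn4 natrD.
  have c3 : n.+3%:R = nn + 3 :> rat by rewrite -addn3 natrD.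
  have hc : E n.+3 = (nn + 3) * E n.+2 - e.
    by rewrite [E n.+3]ES c3 /e !exprS; ring.
  have hd : E n.+4 = (nn + 4) * E n.+3 + e.
    by rewrite [E n.+4]ES c4 /e !exprS; ring.
  have ha : n.+2%:R * E n.+1 = E n.+2 - e.
    by rewrite [E n.+2]ES /e !exprS; ring.
  have hE4 : E n.+4 != 0 by rewrite lt0r_neq0 // (Epos n.+2).
  have hE3 : E n.+3 != 0 by rewrite lt0r_neq0 // (Epos n.+1).
  have -> : 2 * (n.+4%:R * n.+3%:R * E n.+2 / E n.+4 / 2) =
            (nn + 4) * (nn + 3) * E n.+2 / E n.+4 by rewrite c4 c3; field.
  have -> : 2 * (n.+3%:R * n.+2%:R * E n.+1 / E n.+3 / 2) =
            (nn + 3) * (E n.+2 - e) / E n.+3 by rewrite -ha c3 mulrA; field.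
  rewrite c4 c3; exact: (alg _ _ _ _ _ (ler0n _ n) he hb hc hd).
- move=> x hx.
  set n := (N - x - 2)%N.
  have h2 : (N - x)%N = n.+2 by rewrite /n; lia.
  rewrite (p_eq _ _ _ h2) h2 /=.
  have hE := Epos n.
  have -> : 2 * (n.+2%:R * n.+1%:R * E n / E n.+2 / 2) - 1 =
            (n.+2%:R * n.+1%:R * E n - E n.+2) / E n.+2.
    by field; rewrite lt0r_neq0.
  rewrite E_sign -signr_odd /=.
  have hn : 0 < n.+1%:R :> rat by rewrite ltr0n.
  case: (odd n); rewrite /= ?expr1 ?expr0; split => // _.
    by rewrite mulN1r mulNr oppr_lt0 divr_gt0.
  by rewrite mul1r divr_gt0.
Qed.
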